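(* In the FIND setting of the context, fix a leaf cluster $\mathcal C_r$, a consistent ordering of $\mathcal T_r^+$, and perform the elimination $\mathbf A_{g+}=\mathbf L_g^{-1}\mathbf A_g$ while updating $\boldsymbol\Sigma_{g+}=\mathbf L_g^{-1}\boldsymbol\Sigma_g\mathbf L_g^{-\dagger}$ (starting from $\boldsymbol\Sigma_{g_1}=\boldsymbol\Sigma$). Then for every node $g$ of $\mathcal T_r^+$: (I) for every node $h$ of $\mathcal T_r^+$ with $\mathcal S_h\ge\mathcal S_g$ (i.e. $h=g$ or $h$ after $g$), $\boldsymbol\Sigma_g(\mathcal S_h,\mathcal S_{>h}\setminus\mathcal B_h)=0$ and $\boldsymbol\Sigma_g(\mathcal S_{>h}\setminus\mathcal B_h,\mathcal S_h)=0$; (II) (a) $\boldsymbol\Sigma_{g+}(\mathcal S_{\le g},\mathcal S_{\le g})=\boldsymbol\Sigma_g(\mathcal S_{\le g},\mathcal S_{\le g})$; (b) $\boldsymbol\Sigma_{g+}(\mathcal M,\mathcal S_{>g}\setminus\mathcal B_g)=\boldsymbol\Sigma_g(\mathcal M,\mathcal S_{>g}\setminus\mathcal B_g)$; (c) $\boldsymbol\Sigma_{g+}(\mathcal S_{>g}\setminus\mathcal B_g,\mathcal M)=\boldsymbol\Sigma_g(\mathcal S_{>g}\setminus\mathcal B_g,\mathcal M)$; (III) $\boldsymbol\Sigma_{g+}(\mathcal B_g,\mathcal B_g)=\boldsymbol\Sigma_g(\mathcal B_g,\mathcal B_g)-\mathcal L_g\boldsymbol\Sigma_g(\mathcal S_g,\mathcal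 B_g)-\boldsymbol\Sigma_g(\mathcal B_g,\mathcal S_g)\mathcal L_g^\dagger+\mathcal L_g\boldsymbol\Sigma_g(\mathcal S_g,\mathcal S_g)\mathcal L_g^\dagger$.
   Context: Setting (FIND). $\mathcal M$ is a finite set of mesh nodes; $\mathbf A$ is an invertible complex matrix indexed by $\mathcal M\times\mathcal M$, structurally symmetric ($A_{ij}\neq0\iff A_{ji}\neq0$); distinct nodes $i,j$ are connected if $A_{ij}\neq 0$. $\boldsymbol\Sigma$ is a complex matrix indexed by $\mathcal M\times\mathcal M$ with $\Sigma_{ij}=0$ whenever $i\neq j$ and $i,j$ are not connected. $\dagger$ denotes conjugate transpose and $\mathbf X^{-\dagger}=(\mathbf X^{-1})^\dagger$. For $X,Y\subseteq\mathcal M$, $\mathbf X(X,Y)$ is the submatrix with rows in $X$ and columns in $Y$. For a cluster $\mathcal C\subseteq\mathcal M$: boundary set $\mathcal B_{\mathcal C}=\{i\in\mathcal C: A_{ij}\neq 0\text{ for some } j\notin\mathcal C\}$, inner set $\mathcal I_{\mathcal C}=\mathcal C\setminus\mathcal B_{\mathcal C}$; for $\mathcal C_g$ write $\mathcal B_g,\mathcal I_g$. Cluster tree: $\mathcal T$ is a rooted binary tree of clusters with root $\mathcal M$, each non-leaf cluster the disjoint union of its two children. For a leaf $\mathcal C_r$ with path $r=a_0,\dots,a_d$ (root) and $b_k$ the sibling of $a_k$, the augmented tree $\mathcal T_r^+$ has root $\mathcal C_{-r}=\mathcal M\setminus\mathcal C_r$; for $0\le k\le d-2$, $\mathcal C_{-a_k}=\mathcal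 M\setminus\mathcal C_{a_k}$ has children $\mathcal C_{b_k}$ and $\mathcal C_{-a_{k+1}}$, with $\mathcal C_{-a_{d-1}}$ identified with $\mathcal C_{b_{d-1}}$ (equal sets); each basic cluster $\mathcal C_{b_k}$ carries its subtree from $\mathcal T$. Private inner nodes: $\mathcal S_g=\mathcal I_g$ for a leaf $g$ of $\mathcal T_r^+$; $\mathcal S_g=\mathcal I_g\setminus(\mathcal I_i\cup\mathcal I_j)$ if $g$ has children $i,j$. The sets $\mathcal S_g$ ($g\in\mathcal T_r^+$), $\mathcal B_{-r}$, $\mathcal C_r$ partition $\mathcal M$. Consistent ordering: a total order $g_1,\dots,g_m$ of the nodes of $\mathcal T_r^+$ with every node after all its descendants; $\mathcal S_h<\mathcal S_g$ means $h$ precedes $g$. $\mathcal S_{<g}$, $\mathcal S_{\le g}$: union of $\mathcal S_h$ over $h$ preceding $g$ (resp. preceding or equal); $\mathcal S_{>g}$: union of $\mathcal S_h$ over $h$ after $g$, together with $\mathcal B_{-r}\cup\mathcal C_r$. Elimination: $\mathbf A_{g_1}=\mathbf A$, $\boldsymbol\Sigma_{g_1}=\boldsymbol\Sigma$. For each $g$ (with $\mathbf A_g(\mathcal S_g,\mathcal S_g)$ assumed invertible), $\mathcal L_g=\mathbf A_g(\mathcal B_g,\mathcal S_g)\mathbf A_g(\mathcal S_g,\mathcal S_g)^{-1}$, $\mathbf L_g$ is the identity on $\mathcal M$ except $\mathbf L_g(\mathcal B_g,\mathcal S_g)=\mathcal L_g$ (this is the block Gaussian elimination factor of the columns $\mathcal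 S_g$), $\mathbf A_{g+}=\mathbf L_g^{-1}\mathbf A_g$, $\boldsymbol\Sigma_{g+}=\mathbf L_g^{-1}\boldsymbol\Sigma_g\mathbf L_g^{-\dagger}$, and $\mathbf A_{g_{t+1}}=\mathbf A_{g_t+}$, $\boldsymbol\Sigma_{g_{t+1}}=\boldsymbol\Sigma_{g_t+}$. *)

(* Defs.v *)
From HB Require Import structures.
From mathcomp Require Import all_boot all_order all_algebra.
Set Implicit Arguments. Unset Strict Implicit. Unset Printing Implicit Defensive.
Import Order.TTheory GRing.Theory Num.Theory.
Local Open Scope ring_scope.

(* Mesh nodes M = 'I_n; scalars in a numeric closed field C (e.g. the complex
   numbers), whose conjugation is Num.conj. *)

Section FIND.
Variables (C : numClosedFieldType) (n : nat).

Definition ctr (p q : nat) (X : 'M[C]_(p, q)) : 'M[C]_(q, p) :=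
  (map_mx (@Num.conj C) X)^T.

(* submatrix X(R, K) with rows in R and columns in K (in increasing order) *)
Definition subm (R K : {set 'I_n}) (X : 'M[C]_n) : 'M[C]_(#|R|, #|K|) :=
  \matrix_(i < #|R|, j < #|K|) X (enum_val i) (enum_val j).

(* embedding of the index set R into M (so that emb R * Y * (emb K)^T is the
   n x n matrix having Y as its (R,K) block and zeros elsewhere) *)
Definition emb (R : {set 'I_n}) : 'M[C]_(n, #|R|) :=
  \matrix_(i < n, k < #|R|) (i == enum_val k)%:R.

Definition bnd (A : 'M[C]_n) (Cl : {set 'I_n}) : {set 'I_n} :=
  [set i in Cl | [exists j, (j \notin Cl) && (A i j != 0)]].
Definition inn (A : 'M[C]_n) (Cl : {set 'I_n}) : {set 'I_n} := Cl :\: bnd A Cl.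

Inductive ctree := CLeaf of {set 'I_n} | CNode of {set 'I_n} & ctree & ctree.

Definition label (t : ctree) : {set 'I_n} :=
  match t with CLeaf X => X | CNode X _ _ => X end.

Fixpoint wf_ctree (t : ctree) : Prop :=
  match t with
  | CLeaf _ => True
  | CNode X l r => [/\ X = label l :|: label r, [disjoint label l & label r],
                      wf_ctree l & wf_ctree r]
  end.

Definition cluster_tree (t : ctree) : Prop := label t = setT /\ wf_ctree t.

(* nodes are addressed by paths from the root: false = left, true = right *)
Fixpoint sub_at (t : ctree) (p : seq bool) : option ctree :=
  match p, t with
  | [::], _ => Some t
  | b :: p', CNode _ l r => sub_at (if b then r else l) p'
  | _ :: _, CLeaf _ => None
  end.

Fixpoint nodes (t : ctree) : seq (seq bool) :=
  match t with
  | CLeaf _ => [:: [::]]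
  | CNode _ l r => [::] :: (map (cons false) (nodes l) ++ map (cons true) (nodes r))
  end.

Definition node_label (t : ctree) (p : seq bool) : {set 'I_n} :=
  oapp label set0 (sub_at t p).

(* C_r is a leaf of T reached by the nonempty path p (so r is not the root) *)
Definition is_leaf_path (t : ctree) (p : seq bool) : Prop :=
  p != [::] /\ exists X, sub_at t p = Some (CLeaf X).

(* Augmented tree T_r^+.  [aug_rec acc t p]: t is the subtree of T at the
   current node a_k of the path to r, acc is the already built tree of
   C_{-a_k} = M \ C_{a_k}; p is the remaining path to r. *)
Fixpoint aug_rec (acc t : ctree) (p : seq bool) : ctree :=
  match p, t with
  | b :: p', CNode _ l r =>
      let a := if b then r else l in
      let s := if b then l else r in
      aug_rec (CNode (~: label a) s acc) a p'
  | _, _ => acc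
  end.

(* root step: C_{-a_{d-1}} is identified with the sibling C_{b_{d-1}} *)
Definition augtree (t : ctree) (p : seq bool) : ctree :=
  match p, t with
  | b :: p', CNode _ l r =>
      aug_rec (if b then l else r) (if b then r else l) p'
  | _, _ => t
  end.

Definition consistent_ordering (t : ctree) (ord : seq (seq bool)) : Prop :=
  perm_eq ord (nodes t) /\
  forall g h, g \in nodes t -> h \in nodes t -> prefix g h -> g != h ->
    (index h ord < index g ord)%N.

Variable A : 'M[C]_n.

Definition priv (t : ctree) (g : seq bool) : {set 'I_n} :=
  match sub_at t g with
  | Some (CLeaf X) => inn A X
  | Some (CNode X l r) => inn A X :\: (inn A (label l) :|: inn A (label r))
  | None => set0
  end.

Definition Bnode (t : ctree) (g : seq bool) : {set 'I_n} := bnd A (node_label t g).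

Section Order.
Variables (T : ctree) (p : seq bool) (ord : seq (seq bool)).
Let Tp := augtree T p.

Definition S_le (g : seq bool) : {set 'I_n} :=
  \bigcup_(h <- take (index g ord).+1 ord) priv Tp h.
Definition S_lt (g : seq bool) : {set 'I_n} :=
  \bigcup_(h <- take (index g ord) ord) priv Tp h.
(* S_{>g} also contains B_{-r} and C_r *)
Definition S_gt (g : seq bool) : {set 'I_n} :=
  (\bigcup_(h <- drop (index g ord).+1 ord) priv Tp h)
    :|: bnd A (label Tp) :|: node_label T p.

Definition Lcal (Ag : 'M[C]_n) (g : seq bool) :=
  subm (Bnode Tp g) (priv Tp g) Ag *m invmx (subm (priv Tp g) (priv Tp g) Ag).

Definition Lmat (Ag : 'M[C]_n) (g : seq bool) : 'M[C]_n :=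
  1%:M + emb (Bnode Tp g) *m Lcal Ag g *m (emb (priv Tp g))^T.

Definition elim_step (st : 'M[C]_n * 'M[C]_n) (g : seq bool) :=
  let L := Lmat st.1 g in
  (invmx L *m st.1, invmx L *m st.2 *m ctr (invmx L)).

(* (A_{g_{t+1}}, Sigma_{g_{t+1}}) ; for t = size ord this is the state after
   the last elimination *)
Definition state (Sigma : 'M[C]_n) (t : nat) : 'M[C]_n * 'M[C]_n :=
  foldl elim_step (A, Sigma) (take t ord).

End Order.
End FIND.

(* Main.v *)
Require Import Defs.
From HB Require Import structures.
From mathcomp Require Import all_boot all_order all_algebra.
Import Order.TTheory GRing.Theory Num.Theory.
Local Open Scope ring_scope.
Set Implicit Arguments. Unset Strict Implicit. Unset Printing Implicit Defensive.

Lemma sub_at_cat n (t : ctree n) q q' :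
  sub_at t (q ++ q') = obind (fun u => sub_at u q') (sub_at t q).
Proof. by elim: q t => [|b q IH] [X|X l r] //=. Qed.

Lemma sub_at_wf n (t : ctree n) q u : wf_ctree t -> sub_at t q = Some u -> wf_ctree u.
Proof.
elim: q t => [|b q IH] [X|X l r] //=; try by move=> w [<-].
by case=> _ _ wl wr; case: b; [apply: IH | apply: IH].
Qed.

Lemma sub_at_label n (t : ctree n) q u :
  wf_ctree t -> sub_at t q = Some u -> label u \subset label t.
Proof.
elim: q t => [|b q IH] [X|X l r] //=; try by move=> w [<-].
case=> -> _ wl wr; case: b => h.
  by apply: subset_trans (IH _ wr h) _; apply: subsetUr.
by apply: subset_trans (IH _ wl h) _; apply: subsetUl.
Qed.

Lemma node_label_sub n (t : ctree n) q : wf_ctree t -> node_label t q \subset label t.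
Proof.
rewrite /node_label; case E: (sub_at t q) => [u|] w /=; last exact: sub0set.
exact: sub_at_label E.
Qed.

Lemma disj_nodes n (t : ctree n) q q' : wf_ctree t -> ~~ prefix q q' -> ~~ prefix q' q ->
  [disjoint node_label t q & node_label t q'].
Proof.
elim: t q q' => [X|X l IHl r IHr] [|b q] [|b' q'] //=.
  by move=> _ _ _; rewrite /node_label /= disjoints_subset sub0set.
case=> _ dlr wl wr; rewrite /node_label /= -/(node_label _ _) -/(node_label _ _).
case: b; case: b' => //= h1 h2.
- exact: IHr.
- rewrite disjoint_sym; apply: disjointWl (node_label_sub q' wl) _.
  rewrite disjoint_sym; apply: disjointWl (node_label_sub q wr) _.
  by rewrite disjoint_sym.
- apply: disjointWl (node_label_sub q wl) _.
  rewrite disjoint_sym; apply: disjointWl (node_label_sub q' wr) _.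
  by rewrite disjoint_sym.
- exact: IHl.
Qed.

Lemma aug_rec_ok n (acc t : ctree n) q : wf_ctree acc -> wf_ctree t ->
  label acc = ~: label t -> sub_at t q <> None ->
  wf_ctree (aug_rec acc t q) /\ label (aug_rec acc t q) = ~: node_label t q.
Proof.
elim: q acc t => [|b q IH] acc [X|X l r] //= wa wt la hs.
case: wt => eX dlr wl wr.
have H : forall a s, X = label a :|: label s -> [disjoint label a & label s] ->
  wf_ctree a -> wf_ctree s -> sub_at a q <> None ->
  wf_ctree (aug_rec (CNode (~: label a) s acc) a q) /\
  label (aug_rec (CNode (~: label a) s acc) a q) = ~: node_label a q.
  move=> a s eXa das wfa wfs hq; apply: IH => //=; split => //.
  - rewrite la eXa; apply/setP => x; rewrite !inE.
    case xa: (x \in label a) => /=; last by case: (x \in label s).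
    by rewrite (disjointFr das xa).
  - rewrite la eXa setCU; apply: disjointWr (subsetIr _ _) _.
    by rewrite disjoint_sym disjoints_subset.
case: b hs => hs; rewrite /node_label /=.
  by apply: H => //; [rewrite setUC | rewrite disjoint_sym].
by apply: H.
Qed.

Lemma augtree_ok n (T : ctree n) p : cluster_tree T -> is_leaf_path T p ->
  wf_ctree (augtree T p) /\ label (augtree T p) = ~: node_label T p.
Proof.
case=> lT wT [] ; case: p => [|b p] // _ [Y hY].
case: T lT wT hY => [X|X l r] //= lT [eX dlr wl wr] hY.
have hs : forall a s, label a :|: label s = setT -> [disjoint label a & label s] ->
   wf_ctree a -> wf_ctree s -> sub_at a p = Some (CLeaf Y) ->
   wf_ctree (aug_rec s a p) /\ label (aug_rec s a p) = ~: node_label a p.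
  move=> a s e d wa ws h; apply: aug_rec_ok => //; last by rewrite h.
  apply/setP => x; move/setP: e => /(_ x); rewrite !inE.
  case xa: (x \in label a) => /=; last by move=> ->.
  by rewrite (disjointFr d xa).
rewrite /node_label /=; case: b hY => hY.
  by apply: hs => //; [rewrite setUC -eX | rewrite disjoint_sym].
by apply: hs => //; rewrite -eX.
Qed.

Lemma nodes_uniq n (t : ctree n) : uniq (nodes t).
Proof.
elim: t => [X|X l IHl r IHr] //=.
rewrite mem_cat cat_uniq !map_inj_uniq //; last by move=> ? ? [].
rewrite IHl IHr /= andbT; apply/andP; split.
  by apply/norP; split; apply/mapP; case.
  by apply/hasPn => _ /mapP [x _ ->]; apply/mapP; case.
by move=> ? ? [].
Qed.

Lemma priv_inn n (C : numClosedFieldType) (A : 'M[C]_n) t g :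
  priv A t g \subset inn A (node_label t g).
Proof.
rewrite /priv /node_label; case: (sub_at t g) => [[X|X l r]|] //=.
  exact: subsetDl.
exact: sub0set.
Qed.

Lemma bnd_mono n (C : numClosedFieldType) (A : 'M[C]_n) (X Y : {set 'I_n}) x :
  Y \subset X -> x \in Y -> x \in bnd A X -> x \in bnd A Y.
Proof.
move=> sYX xY; rewrite !inE => /andP [_ /existsP [j /andP [jX Aj]]].
rewrite xY /=; apply/existsP; exists j; rewrite Aj andbT.
by apply: contra jX; apply: (subsetP sYX).
Qed.

Lemma innP n (C : numClosedFieldType) (A : 'M[C]_n) (X : {set 'I_n}) x :
  x \in inn A X -> x \in X /\ x \notin bnd A X /\ forall j, j \notin X -> A x j = 0.
Proof.
rewrite /inn inE => /andP [xb xX]; split => //; split => // j jX.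
apply/eqP; apply: contraNT xb => Aj; rewrite inE xX /=.
by apply/existsP; exists j; rewrite jX.
Qed.

Lemma bnd_sub n (C : numClosedFieldType) (A : 'M[C]_n) (X : {set 'I_n}) : bnd A X \subset X.
Proof. by apply/subsetP => x; rewrite inE => /andP []. Qed.

Lemma emb_out n (C : numClosedFieldType) (R : {set 'I_n}) i k :
  i \notin R -> (emb C R) i k = 0.
Proof.
move=> iR; rewrite mxE; case: eqP => // e; move: iR; rewrite e.
by rewrite enum_valP.
Qed.

Lemma sum_delta n (C : numClosedFieldType) (v : 'I_n) (F : 'I_n -> C) :
  \sum_k (k == v)%:R * F k = F v.
Proof.
rewrite (bigD1 v) //= eqxx mul1r big1 ?addr0 // => k /negbTE ->.
by rewrite mul0r.
Qed.

Lemma mul_trembX n (C : numClosedFieldType) (R : {set 'I_n}) m (X : 'M[C]_(n, m)) a j :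
  ((emb C R)^T *m X) a j = X (enum_val a) j.
Proof.
rewrite mxE -[RHS](sum_delta (enum_val a) (fun k => X k j)).
by apply: eq_bigr => k _; rewrite !mxE.
Qed.

Lemma mul_Xemb n (C : numClosedFieldType) (R : {set 'I_n}) m (X : 'M[C]_(m, n)) i a :
  (X *m emb C R) i a = X i (enum_val a).
Proof.
rewrite mxE -[RHS](sum_delta (enum_val a) (fun k => X i k)).
by apply: eq_bigr => k _; rewrite !mxE mulrC.
Qed.

Lemma subm_emb n (C : numClosedFieldType) (R K : {set 'I_n}) (X : 'M[C]_n) :
  subm R K X = (emb C R)^T *m X *m emb C K.
Proof. by apply/matrixP => a b; rewrite mul_Xemb mul_trembX !mxE. Qed.

Lemma trembemb n (C : numClosedFieldType) (R K : {set 'I_n}) :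
  (emb C R)^T *m emb C K = \matrix_(a, b) (enum_val a == enum_val b)%:R.
Proof. by apply/matrixP => a b; rewrite mul_trembX !mxE. Qed.

Lemma trembemb1 n (C : numClosedFieldType) (R : {set 'I_n}) :
  (emb C R)^T *m emb C R = 1%:M.
Proof.
rewrite trembemb; apply/matrixP => a b; rewrite !mxE.
by rewrite (inj_eq enum_val_inj).
Qed.

Lemma trembemb0 n (C : numClosedFieldType) (R K : {set 'I_n}) :
  [disjoint R & K] -> (emb C R)^T *m emb C K = 0.
Proof.
move=> d; rewrite trembemb; apply/matrixP => a b; rewrite !mxE.
case: eqP => // e; move: (enum_valP a) (enum_valP b); rewrite e => h1 h2.
by rewrite (disjointFr d h1) in h2.
Qed.

Lemma ctr_mul (C : numClosedFieldType) m k l (X : 'M[C]_(m, k)) (Y : 'M[C]_(k, l)) :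
  ctr (X *m Y) = ctr Y *m ctr X.
Proof. by rewrite /ctr map_mxM trmx_mul. Qed.

Lemma ctr_emb n (C : numClosedFieldType) (R : {set 'I_n}) :
  ctr (emb C R) = (emb C R)^T.
Proof. by apply/matrixP => a b; rewrite !mxE conjC_nat. Qed.

Lemma ctr_tremb n (C : numClosedFieldType) (R : {set 'I_n}) :
  ctr (emb C R)^T = emb C R.
Proof. by apply/matrixP => a b; rewrite !mxE conjC_nat. Qed.

Lemma ctr1B n (C : numClosedFieldType) (N : 'M[C]_n) :
  ctr (1%:M - N) = 1%:M - ctr N.
Proof. by rewrite /ctr map_mxB map_mx1 linearB /= trmx1. Qed.

Definition Nm n (C : numClosedFieldType) (B S : {set 'I_n}) (Lc : 'M[C]_(#|B|, #|S|)) :=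
  emb C B *m Lc *m (emb C S)^T.

Lemma Nm_sq n (C : numClosedFieldType) (B S : {set 'I_n}) (Lc : 'M[C]_(#|B|, #|S|)) :
  [disjoint S & B] -> Nm Lc *m Nm Lc = 0.
Proof.
move=> d; rewrite /Nm -!mulmxA (mulmxA (emb C S)^T) trembemb0 //.
by rewrite mul0mx !(mulmx0, mul0mx).
Qed.

Lemma Lmat_inv n (C : numClosedFieldType) (B S : {set 'I_n}) (Lc : 'M[C]_(#|B|, #|S|)) :
  [disjoint S & B] -> invmx (1%:M + Nm Lc) = 1%:M - Nm Lc.
Proof.
move=> d; have e : (1%:M + Nm Lc) *m (1%:M - Nm Lc) = 1%:M.
  by rewrite mulmxDl mulmxBr !mul1mx mulmxBr mulmx1 Nm_sq // subr0 subrK.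
have [u _] := mulmx1_unit e.
transitivity (invmx (1%:M + Nm Lc) *m ((1%:M + Nm Lc) *m (1%:M - Nm Lc))).
  by rewrite e mulmx1.
by rewrite mulmxA mulVmx // mul1mx.
Qed.

Lemma ctrN n (C : numClosedFieldType) (B S : {set 'I_n}) (Lc : 'M[C]_(#|B|, #|S|)) :
  ctr (Nm Lc) = emb C S *m ctr Lc *m (emb C B)^T.
Proof. by rewrite /Nm !ctr_mul ctr_tremb ctr_emb mulmxA. Qed.

Lemma sig_step n (C : numClosedFieldType) (B S : {set 'I_n}) (Lc : 'M[C]_(#|B|, #|S|)) X :
  [disjoint S & B] ->
  invmx (1%:M + Nm Lc) *m X *m ctr (invmx (1%:M + Nm Lc)) =
  X - Nm Lc *m X - X *m ctr (Nm Lc) + Nm Lc *m X *m ctr (Nm Lc).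
Proof.
move=> d; rewrite Lmat_inv // ctr1B mulmxBl mul1mx mulmxBr mulmx1.
by rewrite mulmxBl opprD opprK addrA.
Qed.

Lemma emb_row0 n (C : numClosedFieldType) (R : {set 'I_n}) m (Z : 'M[C]_(#|R|, m)) i j :
  i \notin R -> (emb C R *m Z) i j = 0.
Proof. by move=> iR; rewrite mxE big1 // => k _; rewrite emb_out // mul0r. Qed.

Lemma emb_col0 n (C : numClosedFieldType) (R : {set 'I_n}) m (Z : 'M[C]_(m, #|R|)) i j :
  j \notin R -> (Z *m (emb C R)^T) i j = 0.
Proof. by move=> jR; rewrite mxE big1 // => k _; rewrite mxE emb_out // mulr0. Qed.

Lemma colz_mul (C : numClosedFieldType) m k l (Z : 'M[C]_(m, k)) (W : 'M[C]_(k, l)) i j :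
  (forall a, W a j = 0) -> (Z *m W) i j = 0.
Proof. by move=> h; rewrite mxE big1 // => a _; rewrite h mulr0. Qed.

Lemma rowz_mul (C : numClosedFieldType) m k l (Z : 'M[C]_(m, k)) (W : 'M[C]_(k, l)) i j :
  (forall a, Z i a = 0) -> (Z *m W) i j = 0.
Proof. by move=> h; rewrite mxE big1 // => a _; rewrite h mul0r. Qed.

Lemma entD (C : numClosedFieldType) m k (X Y : 'M[C]_(m, k)) i j :
  (X + Y) i j = X i j + Y i j.
Proof. by rewrite mxE. Qed.

Lemma entN (C : numClosedFieldType) m k (X : 'M[C]_(m, k)) i j :
  (- X) i j = - X i j.
Proof. by rewrite mxE. Qed.

Lemma entry_step n (C : numClosedFieldType) (B S : {set 'I_n}) (Lc : 'M[C]_(#|B|, #|S|))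
   (X : 'M[C]_n) i j :
  [disjoint S & B] ->
  (i \notin B \/ forall k, k \in S -> X k j = 0) ->
  (j \notin B \/ forall l, l \in S -> X i l = 0) ->
  (i \notin B \/ j \notin B) ->
  (invmx (1%:M + Nm Lc) *m X *m ctr (invmx (1%:M + Nm Lc))) i j = X i j.
Proof.
move=> d c1 c2 c3; rewrite sig_step // !entD !entN.
have -> : (Nm Lc *m X) i j = 0.
  case: c1 => [iB|h]; first by rewrite /Nm -!mulmxA emb_row0.
  rewrite /Nm -mulmxA; apply: colz_mul => a.
  by rewrite mul_trembX h // enum_valP.
have -> : (X *m ctr (Nm Lc)) i j = 0.
  rewrite ctrN; case: c2 => [jB|h]; first by rewrite !mulmxA emb_col0.
  rewrite !mulmxA; apply: rowz_mul => a; apply: rowz_mul => b.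
  by rewrite mul_Xemb h // enum_valP.
have -> : (Nm Lc *m X *m ctr (Nm Lc)) i j = 0.
  case: c3 => [iB|jB]; first by rewrite /Nm -!mulmxA emb_row0.
  by rewrite ctrN !mulmxA emb_col0.
by rewrite !subr0 addr0.
Qed.

Lemma subm_step n (C : numClosedFieldType) (B S : {set 'I_n}) (Lc : 'M[C]_(#|B|, #|S|))
   (X : 'M[C]_n) : [disjoint S & B] ->
  subm B B (invmx (1%:M + Nm Lc) *m X *m ctr (invmx (1%:M + Nm Lc))) =
  subm B B X - Lc *m subm S B X - subm B S X *m ctr Lc + Lc *m subm S S X *m ctr Lc.
Proof.
move=> d; rewrite sig_step // !subm_emb.
have t1 : (emb C B)^T *m (Nm Lc *m X) *m emb C B = Lc *m ((emb C S)^T *m X *m emb C B).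
  by rewrite /Nm !mulmxA trembemb1 mul1mx.
have t2 : (emb C B)^T *m (X *m ctr (Nm Lc)) *m emb C B =
    (emb C B)^T *m X *m emb C S *m ctr Lc.
  by rewrite ctrN -!mulmxA trembemb1 mulmx1.
have t3 : (emb C B)^T *m (Nm Lc *m X *m ctr (Nm Lc)) *m emb C B =
    Lc *m ((emb C S)^T *m X *m emb C S) *m ctr Lc.
  rewrite ctrN /Nm !mulmxA trembemb1 mul1mx -!mulmxA trembemb1 mulmx1.
  by rewrite !mulmxA.
by rewrite !mulmxDr !mulmxN !mulmxDl !mulNmx t1 t2 t3.
Qed.

Lemma bigcup_seqE (T : eqType) n (s : seq T) (F : T -> {set 'I_n}) x :
  (x \in \bigcup_(h <- s) F h) = has (fun h => x \in F h) s.
Proof. by elim: s => [|a s IH]; rewrite ?big_nil ?big_cons ?inE //= IH. Qed.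

Lemma index_drop (T : eqType) (s : seq T) k h :
  uniq s -> h \in drop k s -> (k <= index h s)%N.
Proof.
move=> us hd; have : uniq (take k s ++ drop k s) by rewrite cat_take_drop.
rewrite cat_uniq => /and3P [_ hn _].
have ht : h \notin take k s by apply: contra hn => ht; apply/hasP; exists h.
rewrite -{1}(cat_take_drop k s) index_cat (negbTE ht) size_take.
case: ltnP => [_|le]; first exact: leq_addr.
by rewrite drop_oversize in hd.
Qed.

Lemma drop_index (T : eqType) (s : seq T) k h :
  h \in s -> (k <= index h s)%N -> h \in drop k s.
Proof.
move=> hs le; rewrite -(nth_index h hs) -(subnKC le) -nth_drop mem_nth //.
by rewrite size_drop ltn_sub2r // ?index_mem // (leq_ltn_trans le) // index_mem.
Qed.

Lemma order_rel n (C : numClosedFieldType) (A : 'M[C]_n) (t : ctree n) ord h h' :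
  wf_ctree t -> consistent_ordering t ord -> h \in ord -> h' \in ord ->
  (index h ord < index h' ord)%N ->
  [disjoint node_label t h & node_label t h'] \/
  (node_label t h \subset node_label t h' /\
   forall x, x \in priv A t h' -> x \in node_label t h -> x \in bnd A (node_label t h)).
Proof.
move=> wt [pe co] ho ho' lt.
have hn : h \in nodes t by rewrite -(perm_mem pe).
have hn' : h' \in nodes t by rewrite -(perm_mem pe).
case pr: (prefix h' h).
  move/prefixP: pr => [[|b q] eh].
    by rewrite eh cats0 ltnn in lt.
  rewrite /node_label eh sub_at_cat /priv.
  case E: (sub_at t h') => [[X|X l r]|] /=; try by left; rewrite disjoints_subset sub0set.
  set c := if b then r else l.
  have wc : wf_ctree c.
    have := sub_at_wf wt E; case => _ _ wl wr; rewrite /c; by case: (b).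
  have wX : label c \subset X.
    have := sub_at_wf wt E; case => -> _ _ _; rewrite /c; case: (b).
      exact: subsetUr.
    exact: subsetUl.
  have sq := node_label_sub q wc.
  right; split; first exact: subset_trans sq wX.
  rewrite -/(node_label c q) => x xp xq.
  have xc : x \in label c := subsetP sq x xq.
  have nic : x \notin inn A (label c).
    by move: xp; rewrite in_setD in_setU /c; case: (b) => /andP [/norP [? ?] _].
  apply: bnd_mono sq xq _.
  by move: nic; rewrite /inn in_setD xc andbT negbK.
case pr': (prefix h h').
  have ne : h != h' by apply: contraTneq lt => ->; rewrite ltnn.
  by have := co _ _ hn hn' pr' ne; rewrite ltnNge ltnW.
by left; apply: disj_nodes => //; rewrite ?pr ?pr'.
Qed.
Unset Implicit Arguments.

Theorem theorem3 (C : numClosedFieldType) (n : nat)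
  (A Sigma : 'M[C]_n) (T : ctree n) (p : seq bool) (ord : seq (seq bool)) :
  A \in unitmx ->
  (forall i j, (A i j != 0) = (A j i != 0)) ->
  (forall i j, i != j -> A i j = 0 -> Sigma i j = 0) ->
  cluster_tree T ->
  is_leaf_path T p ->
  consistent_ordering (augtree T p) ord ->
  (* A_g(S_g,S_g) is invertible at every elimination step *)
  (forall t, (t < size ord)%N ->
     let g := nth [::] ord t in
     subm (priv A (augtree T p) g) (priv A (augtree T p) g)
          (state A T p ord Sigma t).1 \in unitmx) ->
  forall t, (t < size ord)%N ->
  let g := nth [::] ord t in
  let Tp := augtree T p in
  let Ag := (state A T p ord Sigma t).1 in
  let Sg := (state A T p ord Sigma t).2 in
  let Sgp := (state A T p ord Sigma t.+1).2 in
  let S := priv A Tp in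
  let B := Bnode A Tp in
  let Sgt := S_gt A T p ord in
  let Sle := S_le A T p ord in
  let Lg := Lcal A T p Ag g in
  (* (I) *)
  (forall h, h \in ord -> (index g ord <= index h ord)%N ->
     subm (S h) (Sgt h :\: B h) Sg = 0 /\ subm (Sgt h :\: B h) (S h) Sg = 0) /\
  (* (II) *)
  (subm (Sle g) (Sle g) Sgp = subm (Sle g) (Sle g) Sg /\
   subm setT (Sgt g :\: B g) Sgp = subm setT (Sgt g :\: B g) Sg /\
   subm (Sgt g :\: B g) setT Sgp = subm (Sgt g :\: B g) setT Sg) /\
  (* (III) *)
  subm (B g) (B g) Sgp =
    subm (B g) (B g) Sg - Lg *m subm (S g) (B g) Sg
    - subm (B g) (S g) Sg *m ctr Lg + Lg *m subm (S g) (S g) Sg *m ctr Lg.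
Proof.
move=> _ hsym hsig cT lp co _ t ht g Tp Ag Sg Sgp S B Sgt Sle Lg.
have [wTp eTp] := augtree_ok cT lp.
have uo : uniq ord by rewrite (perm_uniq co.1) nodes_uniq.
have ig : index g ord = t by rewrite index_uniq.
have go : g \in ord by rewrite mem_nth.
have privcl : forall h x, x \in S h -> x \in node_label Tp h /\ x \notin B h /\
    forall j, j \notin node_label Tp h -> A x j = 0.
  by move=> h x /(subsetP (priv_inn A Tp h)) /innP.
have dSB : forall h, [disjoint S h & B h].
  by move=> h; rewrite disjoint_subset; apply/subsetP => x /privcl [_ [nb _]]; rewrite inE.
have F3 : forall h, h \in ord -> forall x, x \in Sgt h -> x \in node_label Tp h -> x \in B h.
  move=> h ho x; rewrite /Sgt /S_gt !in_setU => /orP [/orP [xU | xb] | xr] xh.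
  - move: xU; rewrite bigcup_seqE => /hasP [h' hd xp].
    have ho' : h' \in ord := mem_drop hd.
    have lt : (index h ord < index h' ord)%N by apply: index_drop hd.
    case: (order_rel A wTp co ho ho' lt) => [dj | [_ hb]]; last exact: hb.
    have [xh' _] := privcl _ _ xp.
    by rewrite (disjointFr dj xh) in xh'.
  - exact: bnd_mono (node_label_sub h wTp) xh xb.
  - have := subsetP (node_label_sub h wTp) x xh; rewrite eTp inE.
    by rewrite xr.
have Sgtmono : forall h h', h \in ord -> h' \in ord -> (index h ord <= index h' ord)%N ->
    Sgt h' \subset Sgt h.
  move=> h h' ho ho' le; apply/subsetP => x; rewrite /Sgt /S_gt !in_setU.
  case/orP => [/orP [xU|->]|->]; rewrite ?orbT //.
  apply/orP; left; apply/orP; left; move: xU; rewrite !bigcup_seqE => /hasP [k kd xk].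
  apply/hasP; exists k => //; apply: drop_index; first exact: mem_drop kd.
  by apply: leq_trans (index_drop uo kd).
have SinSgt : forall h h', h' \in ord -> (index h ord < index h' ord)%N ->
    S h' \subset Sgt h.
  move=> h h' ho' lt; apply/subsetP => x xS; rewrite /Sgt /S_gt !in_setU.
  apply/orP; left; apply/orP; left; rewrite bigcup_seqE; apply/hasP; exists h' => //.
  exact: drop_index.
have stepu : forall u, (u < size ord)%N ->
   (state A T p ord Sigma u.+1).2 =
   invmx (1%:M + Nm (Lcal A T p (state A T p ord Sigma u).1 (nth [::] ord u)))
   *m (state A T p ord Sigma u).2 *m
   ctr (invmx (1%:M + Nm (Lcal A T p (state A T p ord Sigma u).1 (nth [::] ord u)))).
  by move=> u hu; rewrite /state (take_nth [::]) // foldl_rcons.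
have E' : forall u, (u < size ord)%N ->
    (forall x y, x \in S (nth [::] ord u) -> y \in Sgt (nth [::] ord u) :\: B (nth [::] ord u) ->
       (state A T p ord Sigma u).2 x y = 0 /\ (state A T p ord Sigma u).2 y x = 0) ->
    forall x, x \notin B (nth [::] ord u) -> x \in Sgt (nth [::] ord u) -> forall y,
      (state A T p ord Sigma u.+1).2 x y = (state A T p ord Sigma u).2 x y /\
      (state A T p ord Sigma u.+1).2 y x = (state A T p ord Sigma u).2 y x.
  move=> u hu inv x xB xS y; have xK : x \in Sgt (nth [::] ord u) :\: B (nth [::] ord u).
    by rewrite in_setD xB.
  rewrite stepu //; split; apply: entry_step => //.
  - by left.
  - by right => l lS; case: (inv _ _ lS xK).
  - by left.
  - by right => k kS; case: (inv _ _ kS xK).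
  - by left.
  - by right.
have inv : forall u, (u <= t)%N -> forall h, h \in ord -> (u <= index h ord)%N ->
    forall x y, x \in S h -> y \in Sgt h :\: B h ->
    (state A T p ord Sigma u).2 x y = 0 /\ (state A T p ord Sigma u).2 y x = 0.
  elim => [|u IH] ut h ho uh x y xS; rewrite in_setD => /andP [yB yS].
    rewrite /state take0 /=.
    have [xcl [_ xA]] := privcl _ _ xS.
    have ycl : y \notin node_label Tp h by apply: contra yB; apply: F3.
    have nxy : x != y by apply: contraNneq ycl => <-.
    have Axy : A x y = 0 by apply: xA.
    have Ayx : A y x = 0.
      by apply/eqP; have := hsym x y; rewrite Axy eqxx /= => /esym /negbFE.
    split; [exact: hsig nxy Axy | apply: hsig Ayx; by rewrite eq_sym].
  have hu : (u < size ord)%N by exact: ltn_trans ut ht.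
  set gu := nth [::] ord u.
  have igu : index gu ord = u by rewrite index_uniq.
  have guo : gu \in ord by rewrite mem_nth.
  have IHu := IH (ltnW ut).
  have invg : forall x y, x \in S gu -> y \in Sgt gu :\: B gu ->
       (state A T p ord Sigma u).2 x y = 0 /\ (state A T p ord Sigma u).2 y x = 0.
    by apply: IHu; rewrite ?igu.
  have lt : (index gu ord < index h ord)%N by rewrite igu.
  have xSg : x \in Sgt gu by apply: (subsetP (SinSgt _ _ ho lt)).
  have ySg : y \in Sgt gu by apply: (subsetP (Sgtmono _ _ guo ho (ltnW lt))).
  have yK : y \in Sgt h :\: B h by rewrite in_setD yB yS.
  have [yK1 yK2] := IHu h ho (ltnW uh) x y xS yK.
  case xB: (x \in B gu).
    have yB' : y \notin B gu.
      have [xcl _] := privcl _ _ xS.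
      case: (order_rel A wTp co guo ho lt) => [dj | [sub _]].
        by have := disjointFl dj xcl; rewrite (subsetP (bnd_sub _ _) _ xB).
      apply: contra yB => yb; apply: F3 => //.
      exact: (subsetP sub) (subsetP (bnd_sub _ _) _ yb).
    have [e1 e2] := E' u hu invg y yB' ySg x.
    by rewrite e1 e2.
  have [e1 e2] := E' u hu invg x (negbT xB) xSg y.
  by rewrite e1 e2.
have invt := inv t (leqnn t).
have invg : forall x y, x \in S g -> y \in Sgt g :\: B g -> Sg x y = 0 /\ Sg y x = 0.
  by apply: invt; rewrite ?ig.
have step : Sgp = invmx (1%:M + Nm Lg) *m Sg *m ctr (invmx (1%:M + Nm Lg)) by apply: stepu.
have F4 : forall x, x \in Sle g -> x \notin B g.
  move=> x; rewrite /Sle /S_le bigcup_seqE => /hasP [h hd xp].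
  have ho : h \in ord := mem_take hd.
  have le : (index h ord <= index g ord)%N by rewrite -ltnS; apply: index_ltn.
  have [xcl [xnb _]] := privcl _ _ xp.
  case: (eqVneq h g) => [<- // | ne].
  have lt : (index h ord < index g ord)%N.
    rewrite ltn_neqAle le andbT; apply: contra ne => /eqP e.
    by rewrite -(nth_index [::] ho) e nth_index.
  case: (order_rel A wTp co ho go lt) => [dj | [sub _]].
    by apply/negP => xb; have := disjointFr dj xcl; rewrite (subsetP (bnd_sub _ _) _ xb).
  by apply: contra xnb; apply: bnd_mono sub xcl.
split.
  move=> h ho; rewrite ig => le; split; apply/matrixP => a b; rewrite !mxE.
    by case: (invt h ho le (enum_val a) (enum_val b) (enum_valP a) (enum_valP b)).
  by case: (invt h ho le (enum_val b) (enum_val a) (enum_valP b) (enum_valP a)).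
split; last by rewrite step subm_step.
have E := E' t ht; rewrite -/g -/Sgp -/Sg in E.
have Eg : forall x, x \in Sgt g :\: B g -> forall y, Sgp x y = Sg x y /\ Sgp y x = Sg y x.
  move=> x; rewrite in_setD => /andP [xB xS]; rewrite /Sgp /Sg /g; exact: E.
split; [|split]; apply/matrixP => a b; rewrite !mxE.
- rewrite step entry_step //; [left|left|left]; exact: F4 (enum_valP _).
- by case: (Eg _ (enum_valP b) (enum_val a)).
- by case: (Eg _ (enum_valP a) (enum_val b)).
Qed.
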